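(* Let $X$ and $Y$ be spaces with $X$ compact Hausdorff and let $U$ be an unbased space. Then for every $s\ge0$ the homomorphism $\langle\Xi^U\rangle\colon\langle Y^X\rangle\to\langle (Y^X)^{(U)}\rangle$ maps $\langle Y^X\rangle^{(s)}$ into $\langle (Y^X)^{(U)}\rangle^{(s)}_X$.
   Context: Spaces and maps are based unless called unbased. $\langle W\rangle$ = free abelian group on a set $W$; functions induce homomorphisms $\langle f\rangle$. $Y^X$ = based maps $X\to Y$ (compact-open topology). For $R\subseteq Z$ containing the basepoint, $V\mapsto V|_R$ is induced by restriction. $\mathcal F_n(Z)$ = finite subsets of $Z$ containing the basepoint with at most $n+1$ elements; $\langle Y^Z\rangle^{(s)}=\{V: V|_R=0\ \forall R\in\mathcal F_{s-1}(Z)\}$. $(Y^X)^{(U)}$ is the set of unbased maps $U\to Y^X$; $\Xi^U\colon Y^X\to (Y^X)^{(U)}$ sends $d$ to the constant map at $d$. With $x_0$ the basepoint of $X$, $U\wr X=(U\times X)/(U\times\{x_0\})$ (based at the collapsed set), $\#^X\colon(Y^X)^{(U)}\to Y^{U\wr X}$, $\#^X(w)(u\wr x)=w(u)(x)$, and $\langle (Y^X)^{(U)}\rangle^{(s)}_X=\langle\#^X\rangle^{-1}(\langle Y^{U\wr X}\rangle^{(s)})$. *)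

(* Defs.v *)
From HB Require Import structures.
From mathcomp Require Import all_boot all_order all_algebra.
From mathcomp Require Import all_classical topology.
Set Implicit Arguments. Unset Strict Implicit. Unset Printing Implicit Defensive.
Import Order.TTheory GRing.Theory Num.Theory.
Local Open Scope classical_set_scope.
Local Open Scope ring_scope.

(* An element of <W> is a finitely supported function W -> int.           *)
Definition finsupp (W : Type) (V : W -> int) : Prop :=
  finite_set (V @^-1` [set~ 0]).

Definition freemap (W W' : Type) (f : W -> W') (V : W -> int) : W' -> int :=
  fun w' => \sum_(w \in [set w : {classic W} | f w = w']) V w.

Definition bmaps (X Y : topologicalType) (x0 : X) (y0 : Y) :=
  {f : X -> Y | continuous f /\ f x0 = y0}.

Definition restr (Z Y : Type) (R : set Z) (f : Z -> Y) : {z | R z} -> Y :=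
  fun z => f (proj1_sig z).

(* The filtration <Y^Z>^(s): V|_R = 0 for every R containing the basepoint
   with at most s elements (i.e. R in F_{s-1}(Z)).  Maps Z -> Y are given
   by an abstract carrier S with underlying-function map ev. *)
Definition filtr (Z Y S : Type) (ev : S -> Z -> Y) (z0 : Z) (s : nat)
  (V : S -> int) : Prop :=
  forall R : set Z, R z0 -> (R #<= `I_s)%card ->
    freemap (fun d => @restr Z Y R (ev d)) V = (fun _ => 0).

Definition umaps (U X Y : topologicalType) (x0 : X) (y0 : Y) :=
  {w : U -> bmaps x0 y0 |
     continuous (fun u => (proj1_sig (w u) : {compact-open, X -> Y}))}.

Definition Xi (U X Y : topologicalType) (x0 : X) (y0 : Y)
  (d : bmaps x0 y0) : umaps U x0 y0 :=
  exist _ (fun _ => d) (@cst_continuous U {compact-open, X -> Y} (proj1_sig d)).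

(* carrier: the collapsed basepoint (None) and the points (u,x) with x<>x0 *)
Definition wr (U X : Type) (x0 : X) :=
  {p : option (U * X) | forall q, p = Some q -> q.2 <> x0}.

Lemma wr_base_subproof (U X : Type) (x0 : X) :
  forall q : U * X, None = Some q -> q.2 <> x0.
Proof. by []. Qed.

Definition wr_base (U X : Type) (x0 : X) : wr U x0 :=
  exist (fun p : option (U * X) => forall q, p = Some q -> q.2 <> x0)
    None (@wr_base_subproof U X x0).

Lemma wr_pi_subproof (U X : Type) (x0 : X) (p : U * X) :
  p.2 <> x0 -> forall q, Some p = Some q -> q.2 <> x0.
Proof. by move=> h q [<-]. Qed.

Definition wr_pi (U X : topologicalType) (x0 : X) (p : U * X) : wr U x0 :=
  match pselect (p.2 = x0) with
  | left _ => wr_base U x0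
  | right h => exist (fun p : option (U * X) => forall q, p = Some q -> q.2 <> x0) (Some p) (wr_pi_subproof h)
  end.

(* Y^(U wr X): based maps, continuous for the quotient topology, i.e.
   g is continuous iff g \o wr_pi is continuous on U x X *)
Definition wmaps (U X Y : topologicalType) (x0 : X) (y0 : Y) :=
  {g : wr U x0 -> Y | continuous (g \o @wr_pi U X x0) /\ g (wr_base U x0) = y0}.

Definition sharp_fun (U X Y : topologicalType) (x0 : X) (y0 : Y)
  (w : umaps U x0 y0) (z : wr U x0) : Y :=
  match proj1_sig z with
  | None => y0
  | Some p => proj1_sig (proj1_sig w p.1) p.2
  end.

Section sharp.
Import ArrowAsCompactOpen.

Lemma sharp_subproof (U X Y : topologicalType) (x0 : X) (y0 : Y)
  (hX : compact [set: X]) (hH : hausdorff_space X) (w : umaps U x0 y0) :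
  continuous (sharp_fun w \o @wr_pi U X x0) /\ sharp_fun w (wr_base U x0) = y0.
Proof.
split => //.
have -> : sharp_fun w \o @wr_pi U X x0 =
          uncurry (fun u => proj1_sig (proj1_sig w u) : X -> Y).
  apply: funext => -[u x] /=; rewrite /wr_pi /sharp_fun /=.
  case: pselect => [/= ->|//]; by case: (proj2_sig (proj1_sig w u)) => _ ->.
apply: continuous_uncurry => //.
- move=> x _; exists setT; last by split => //; exact: closedT.
  exact: (@filterT _ (within setT (nbhs x)) (within_filter _ _)).
- exact: (proj2_sig w).
- by move=> u; case: (proj2_sig (proj1_sig w u)).
Qed.
End sharp.

Definition sharp (U X Y : topologicalType) (x0 : X) (y0 : Y)
  (hX : compact [set: X]) (hH : hausdorff_space X)
  (w : umaps U x0 y0) : wmaps U x0 y0 :=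
  exist _ (sharp_fun w) (sharp_subproof hX hH w).

Definition filtrX (U X Y : topologicalType) (x0 : X) (y0 : Y)
  (hX : compact [set: X]) (hH : hausdorff_space X) (s : nat)
  (W : umaps U x0 y0 -> int) : Prop :=
  filtr (fun g : wmaps U x0 y0 => proj1_sig g) (wr_base U x0) s
       (freemap (sharp hX hH) W).

(* Main.v *)
Require Import Defs.
From HB Require Import structures.
From mathcomp Require Import all_boot all_order all_algebra.
From mathcomp Require Import all_classical topology.
Set Implicit Arguments. Unset Strict Implicit.
Import Order.TTheory GRing.Theory Num.Theory.
Local Open Scope classical_set_scope.
Local Open Scope ring_scope.

Lemma fsumE (T : choiceType) (P : set T) (F : T -> int) (r : seq T) :
  uniq r -> (forall w, F w != 0 -> w \in r) ->
  \sum_(w \in P) F w = \sum_(w <- r | `[< P w >]) F w.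
Proof.
move=> ur H; rewrite fsbig_mkcond (fsbigE r) //.
- rewrite big_mkcond [RHS]big_mkcond; apply: eq_bigr => i _.
  rewrite /patch in_setT /=. done.
- move=> i _ Hir; rewrite /patch; case: ifP => // _.
  by apply/eqP; apply: contraNT Hir => /H.
Qed.

Lemma freemap_supp (W W' : Type) (f : W -> W') (V : W -> int) w' :
  freemap f V w' != 0 -> exists w, V w != 0 /\ f w = w'.
Proof.
move=> H; apply: contrapT => hn; move: H; rewrite /freemap fsbig1 ?eqxx //.
move=> w /= fw; apply/eqP; apply: contrapT => Vw; apply: hn; exists w; split => //.
by apply/negP.
Qed.

Lemma finsupp_freemap (W W' : Type) (f : W -> W') (V : W -> int) :
  finsupp V -> finsupp (freemap f V).
Proof.
move=> hV; apply: (sub_finite_set _ (finite_image f hV)).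
move=> w' /= /eqP H; have [w [Vw <-]] := freemap_supp H; exists w => //=; exact/eqP.
Qed.

Module Aux.
Import finmap.
Lemma freemap_comp (W W' W'' : Type) (f : W -> W') (g : W' -> W'') (V : W -> int) :
  Defs.finsupp V -> freemap g (freemap f V) = freemap (g \o f) V.
Proof.
move=> hV; apply: funext => c.
pose S : set {classic W} := V @^-1` [set~ 0].
have hS : finite_set S := hV.
pose s := fset_set S.
have hs (w : {classic W}) : (w \in s) = (V w != 0).
  rewrite in_fset_set //; apply/idP/idP => [/set_mem /eqP //|/eqP H]; exact: mem_set.
pose T : set {classic W'} := f @` S.
have hT : finite_set T := finite_image f hS.
pose t := fset_set T.
have ht (w' : {classic W'}) : (w' \in t) = `[< exists2 w, V w != 0 & f w = w' >].
  rewrite in_fset_set //; apply/idP/asboolP => [/set_mem [w /= /eqP Vw fw]|[w /eqP Vw fw]]; [by exists w|apply: mem_set; by exists w].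
rewrite /freemap (fsumE _ (r := t)) ?fset_uniq //; last first.
  move=> w' H; have [w [Vw fw]] := freemap_supp H; rewrite ht; apply/asboolP; by exists w.
rewrite [RHS](fsumE _ (r := s)) ?fset_uniq //; last by move=> w Vw; rewrite hs.
have hin (w' : {classic W'}) : \sum_(w \in [set w : {classic W} | f w = w']) V w
    = \sum_(w <- s | `[< f w = w' >]) V w.
  by apply: fsumE; rewrite ?fset_uniq // => w Vw; rewrite hs.
under eq_bigr => w' _ do rewrite hin.
rewrite (exchange_big_dep predT) //= [RHS]big_mkcond.
apply: eq_big_seq => w ws /=.
case: (asboolP (g (f w) = c)) => hc.
- rewrite (eq_bigl (fun w' : {classic W'} => w' == (f w : {classic W'}))); last first.
    move=> w' /=; apply/andP/eqP => [[_ /asboolP ->] //|->]; split; exact/asboolP.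
  rewrite -big_filter filter_pred1_uniq ?fset_uniq ?big_seq1 //.
  by rewrite ht; apply/asboolP; exists w => //; rewrite -hs.
- by apply: big1 => w' /andP [/asboolP h1 /asboolP h2]; subst.
Qed.
End Aux.

Theorem lemma14p1 (X Y U : topologicalType) (x0 : X) (y0 : Y)
  (hX : compact [set: X]) (hH : hausdorff_space X) (s : nat)
  (V : bmaps x0 y0 -> int) :
  finsupp V ->
  filtr (fun d : bmaps x0 y0 => proj1_sig d) x0 s V ->
  filtrX hX hH s (freemap (@Xi U X Y x0 y0) V).
Proof.
move=> hV hf R R0 Rs.
rewrite (Aux.freemap_comp _ _ (finsupp_freemap _ hV)) Aux.freemap_comp //.
pose k (z : wr U x0) : X := match proj1_sig z with None => x0 | Some p => p.2 end.
pose R' := k @` R.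
have R'0 : R' x0 by exists (wr_base U x0).
have R's : (R' #<= `I_s)%card := card_le_trans (card_image_le k R) Rs.
pose h (phi : {x | R' x} -> Y) : {z | R z} -> Y :=
  fun z => phi (exist _ (k (proj1_sig z)) (ex_intro2 _ _ (proj1_sig z) (proj2_sig z) erefl)).
transitivity (freemap (h \o (fun d : bmaps x0 y0 => @restr _ _ R' (proj1_sig d))) V).
  congr freemap; apply: funext => d; apply: funext => z.
  rewrite /h /restr /k /= /sharp_fun /=.
  case: (proj1_sig (proj1_sig z)) => [p //|].
  by case: (proj2_sig d) => _ ->.
rewrite -Aux.freemap_comp // hf //.
apply: funext => c; rewrite /freemap; exact: fsbig1.
Qed.
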